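(* Let $u\in(\mathbb{N}\cup\{0\})^m$ and put $M:=\{x\in\mathbb{R}^m:0\leq x\leq u\}$ (entrywise order) with the metric induced by $\|\cdot\|_\infty$. Every optimal code $C$ in $(M,\|\cdot\|_\infty)$ of size $\prod_{i=1}^m(u_i+1)-1$ admits a decomposition $C=A\sqcup B$ for which there exists $i\in\{1,\ldots,m\}$ such that $|A|=\prod_{s=1}^m(u_s+1)-(u_i+1)$ and $|B|=u_i$, and furthermore $A\subseteq M\cap\mathbb{Z}^m$ and $B\subseteq\{x+te_i:t\in\mathbb{R}\}$ for some $x\in\mathbb{Z}^m$.
   Context: For a finite $C\subseteq M$, $\delta(C):=\min\{\|x-y\|_\infty:x,y\in C,x\neq y\}$. An optimal code of size $n$ is an $n$-element subset of $M$ maximizing $\delta$ among all $n$-element subsets. $e_i$ denotes the $i$th standard basis vector. *)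

(* Defs.v *)
From HB Require Import structures.
From mathcomp Require Import all_boot all_order all_algebra.
From mathcomp Require Import finmap.
From mathcomp Require Import reals.
Set Implicit Arguments. Unset Strict Implicit. Unset Printing Implicit Defensive.
Import Order.TTheory GRing.Theory Num.Theory.
Local Open Scope ring_scope.
Local Open Scope fset_scope.

Definition sup_dist (R : realType) (m : nat) (x y : 'rV[R]_m) : R :=
  \big[Num.max/0]_(j < m) `|x 0 j - y 0 j|.

Definition in_box (R : realType) (m : nat) (u : 'I_m -> nat) (x : 'rV[R]_m) : Prop :=
  forall j : 'I_m, 0 <= x 0 j <= (u j)%:R.

(* minimum distance delta(C) of a finite set; convention 0 if |C| <= 1 *)
Definition delta (R : realType) (m : nat) (C : {fset 'rV[R]_m}) : R :=
  match [seq sup_dist p.1 p.2 | p <- [seq (x, y) | x <- C, y <- C] & p.1 != p.2] with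
  | [::] => 0
  | d :: ds => \big[Num.min/d]_(e <- ds) e
  end.

Definition is_code (R : realType) (m : nat) (u : 'I_m -> nat) (C : {fset 'rV[R]_m}) : Prop :=
  forall x, x \in C -> in_box u x.

Definition optimal_code (R : realType) (m : nat) (u : 'I_m -> nat) (n : nat)
  (C : {fset 'rV[R]_m}) : Prop :=
  [/\ is_code u C, #|` C| = n &
      forall C' : {fset 'rV[R]_m}, is_code u C' -> #|` C'| = n -> delta C' <= delta C].

Definition int_point (R : realType) (m : nat) (x : 'rV[R]_m) : Prop :=
  exists k : 'I_m -> int, forall j, x 0 j = (k j)%:~R.

(* Main.v *)
Require Import Defs.
From HB Require Import structures.
From mathcomp Require Import all_boot all_order all_algebra.
From mathcomp Require Import finmap.
From mathcomp Require Import reals lra zify.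
From Stdlib Require Import Classical_Prop.
Import Order.TTheory GRing.Theory Num.Theory.
Local Open Scope ring_scope.
Local Open Scope fset_scope.
Set Implicit Arguments. Unset Strict Implicit. Unset Printing Implicit Defensive.
Lemma sd_ge (R : realType) (m : nat) (x y : 'rV[R]_m) j :
  `|x 0 j - y 0 j| <= sup_dist x y.
Proof. by rewrite /sup_dist (bigD1 j) //= le_max lexx. Qed.

Lemma sd_lt1 (R : realType) (m : nat) (x y : 'rV[R]_m) :
  (forall j, `|x 0 j - y 0 j| < 1) -> sup_dist x y < 1.
Proof. by move=> h; apply: bigmax_lt => // j _; apply: h. Qed.

Lemma bigmin_le_mem (R : realType) (d : R) ds e :
  e \in d :: ds -> \big[Num.min/d]_(e' <- ds) e' <= e.
Proof.
elim: ds d e => [|a ds IH] d e.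
  by rewrite inE big_nil => /eqP ->.
rewrite big_cons !inE => /orP [/eqP ->|/orP [/eqP ->|he]].
- by rewrite ge_min; apply/orP; right; apply: IH; rewrite inE eqxx.
- by rewrite ge_min lexx.
- by rewrite ge_min; apply/orP; right; apply: IH; rewrite inE he orbT.
Qed.

Lemma bigmin_ge_all (R : realType) (d c : R) ds :
  (forall e, e \in d :: ds -> c <= e) -> c <= \big[Num.min/d]_(e' <- ds) e'.
Proof.
elim: ds d => [|a ds IH] d h.
  by rewrite big_nil; apply: h; rewrite inE eqxx.
rewrite big_cons le_min; apply/andP; split; first by apply: h; rewrite !inE eqxx orbT.
apply: IH => e; rewrite inE => /orP [/eqP ->|he]; apply: h; rewrite !inE ?eqxx //.
by rewrite he !orbT.
Qed.

Lemma delta_le (R : realType) (m : nat) (C : {fset 'rV[R]_m}) x y :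
  x \in C -> y \in C -> x != y -> delta C <= sup_dist x y.
Proof.
move=> xC yC xy; rewrite /delta.
have hin : sup_dist x y \in [seq sup_dist p.1 p.2 | p <- [seq (x, y) | x <- C, y <- C] & p.1 != p.2].
  apply/mapP; exists (x, y) => //; rewrite mem_filter /= xy /=.
  by apply/allpairsP; exists (x, y).
move: hin; case: [seq _ | _ <- _ & _] => [//|d ds] hin.
exact: bigmin_le_mem.
Qed.

Lemma delta_ge (R : realType) (m : nat) (C : {fset 'rV[R]_m}) (c : R) x0 y0 :
  x0 \in C -> y0 \in C -> x0 != y0 ->
  (forall x y, x \in C -> y \in C -> x != y -> c <= sup_dist x y) -> c <= delta C.
Proof.
move=> x0C y0C xy0 h; rewrite /delta.
have hin : sup_dist x0 y0 \in [seq sup_dist p.1 p.2 | p <- [seq (x, y) | x <- C, y <- C] & p.1 != p.2].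
  apply/mapP; exists (x0, y0) => //; rewrite mem_filter /= xy0 /=.
  by apply/allpairsP; exists (x0, y0).
have hall : forall e, e \in [seq sup_dist p.1 p.2 | p <- [seq (x, y) | x <- C, y <- C] & p.1 != p.2] -> c <= e.
  move=> e /mapP [[a b]]; rewrite mem_filter /= => /andP [ab /allpairsP [[a1 b1] [/= aC bC]]] E ->; case: E ab => -> -> ab.
  exact: h.
move: hin hall; case: [seq _ | _ <- _ & _] => [//|d ds] _ hall.
exact: bigmin_ge_all.
Qed.

Definition G (m : nat) (u : 'I_m -> nat) := {dffun forall j : 'I_m, 'I_(u j).+1}.

Lemma cardG (m : nat) (u : 'I_m -> nat) : #|{: G u}| = (\prod_(i < m) (u i).+1)%N.
Proof.
rewrite /G card_dep_ffun.
rewrite [RHS](_ : _ = \prod_(i <- enum 'I_m) (u i).+1)%N; last by rewrite big_enum.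
rewrite foldr_map.
elim: (enum 'I_m) => [|a s IH] /=; first by rewrite big_nil.
by rewrite big_cons card_ord IH.
Qed.

Definition rd (R : realType) (m : nat) (e : 'I_m -> bool) (x : 'rV[R]_m) (j : 'I_m) : int :=
  if e j then Num.ceil (x 0 j) else Num.floor (x 0 j).

Definition rho (R : realType) (m : nat) (u : 'I_m -> nat) (e : 'I_m -> bool) (x : 'rV[R]_m) : G u :=
  [ffun j => inord `|rd e x j|%N].

Lemma rd_bounds (R : realType) (m : nat) (u : 'I_m -> nat) e (x : 'rV[R]_m) j :
  in_box u x -> 0 <= rd e x j <= (u j)%:Z.
Proof.
move=> /(_ j) /andP [h0 hu]; rewrite /rd; case: (e j).
  rewrite ceil_ge0 ceil_le_int; apply/andP; split; last by [].
  by apply: lt_le_trans h0; rewrite ltrN10.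
rewrite floor_ge0 h0 /= -(ler_int R) (le_trans (floor_le _)) //.
Qed.

Lemma rhoE (R : realType) (m : nat) (u : 'I_m -> nat) e (x : 'rV[R]_m) j :
  in_box u x -> ((rho u e x j : nat)%:Z = rd e x j).
Proof.
move=> hb; have /andP [h0 hu] := rd_bounds e j hb.
rewrite /rho ffunE inordK; first by rewrite abszE ger0_norm.
by rewrite ltnS -lez_nat abszE ger0_norm.
Qed.

Lemma rd_floor (R : realType) (m : nat) e (x : 'rV[R]_m) j :
  rd e x j = (Num.floor (x 0 j) + (e j && (x 0 j \isn't a Num.int)))%R.
Proof. by rewrite /rd; case: (e j) => /=; rewrite ?ceil_floor ?addr0. Qed.

Lemma rho_close (R : realType) (m : nat) (u : 'I_m -> nat) e (x y : 'rV[R]_m) :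
  in_box u x -> in_box u y -> rho u e x = rho u e y -> forall j, `|x 0 j - y 0 j| < 1.
Proof.
move=> hx hy exy j.
have : rd e x j = rd e y j by rewrite -(rhoE _ j hx) -(rhoE _ j hy) exy.
rewrite /rd; case: (e j) => E.
  have := ceil_itv (x 0 j); have := ceil_itv (y 0 j); rewrite E.
  move=> /andP [a b] /andP [c d]; rewrite ltr_norml; apply/andP; split.
    move: a b c d; rewrite !intrD. lra.
  move: a b c d; rewrite !intrD; lra.
have := floor_itv (x 0 j); have := floor_itv (y 0 j); rewrite E.
move=> /andP [a b] /andP [c d]; rewrite ltr_norml; apply/andP; split.
  move: a b c d; rewrite !intrD; lra.
move: a b c d; rewrite !intrD; lra.
Qed.
Lemma chain (X : Type) (Y K : eqType) (D : X -> Prop) (kap : Y -> K) (mu : Y -> nat)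
  (r r' : X -> Y) (g : Y) :
  (forall x y, D x -> D y -> r' x = r' y -> x = y) ->
  (forall z, z <> g -> exists2 y, D y & r y = z) ->
  (forall y, D y -> r' y = r y \/ (kap (r' y) = kap (r y) /\ (mu (r' y) < mu (r y))%N)) ->
  forall x, D x -> r' x <> r x -> kap g = kap (r x) /\ (mu g < mu (r x))%N.
Proof.
move=> inj sur mv x; move: {2}(mu (r x)) (leqnn (mu (r x))) => n.
elim: n x => [|n IH] x hn Dx hx.
  case: (mv x Dx) => [//|[_]]; by rewrite leqn0 in hn; rewrite (eqP hn).
case: (mv x Dx) => [//|[ek lm]].
have [zg|zg] := eqVneq (r' x) g.
  by rewrite -zg ek.
have [y Dy ry] := sur _ (elimT negP zg \o (fun e => introT eqP e)).
have hy : r' y <> r y.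
  move=> E; have exy : x = y by apply: inj => //; rewrite E ry.
  by apply: hx; rewrite -ry exy.
have hmy : (mu (r y) <= n)%N by rewrite ry -ltnS (leq_trans lm hn).
have [k1 k2] := IH y hmy Dy hy.
by split; [rewrite k1 ry ek | rewrite (ltn_trans k2) // ry].
Qed.

Lemma missing (X : choiceType) (Y : finType) (C : {fset X}) (r : X -> Y) :
  {in C &, injective r} -> #|` C| = (#|{: Y}| - 1)%N -> (0 < #|{: Y}|)%N ->
  exists g, (forall y, y \in C -> r y <> g) /\
            (forall z, z <> g -> exists2 y, y \in C & r y = z).
Proof.
move=> inj hc hpos.
set I := r @` C.
have cI : #|` I| = #|` C| by apply/eqP/card_in_imfsetP.
have cI' : #|[pred z | z \in I]| = #|` I|.
  by apply/card_uniqP; exact: fset_uniq.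
have := cardC [pred z | z \in I]; rewrite cI' cI hc => h.
have h1 : #|[predC [pred z | z \in I]]| == 1%N.
  move: h hpos; case: #|{: Y}| => // n; rewrite subn1 /= => E _; by rewrite -(eqn_add2l n) E addn1.
have /card1P [g hg] := h1.
exists g; split.
  move=> y yC E; have := hg g; rewrite !inE eqxx /= => /negP; apply.
  by apply/imfsetP; exists y.
move=> z zg; have := hg z; rewrite !inE /=.
have -> : (z == g) = false by apply/eqP.
move/negbFE => /imfsetP [y /= yC ->]; by exists y.
Qed.
Definition kap (m : nat) (u : 'I_m -> nat) (j : 'I_m) (z : G u) : {ffun 'I_m -> nat} :=
  [ffun l => if l == j then 0%N else (z l : nat)].

Lemma kap_eq (m : nat) (u : 'I_m -> nat) (j : 'I_m) (a b : G u) :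
  kap j a = kap j b -> (a j : nat) = b j -> a = b.
Proof.
move=> /ffunP hk hj; apply/ffunP => l; apply: val_inj.
have [->|lj] := eqVneq l j; first by [].
by have := hk l; rewrite !ffunE (negbTE lj).
Qed.

Lemma kap_coord (m : nat) (u : 'I_m -> nat) (j l : 'I_m) (a b : G u) :
  kap j a = kap j b -> l != j -> (a l : nat) = b l.
Proof. by move=> /ffunP /(_ l); rewrite !ffunE => h /negbTE lj; rewrite lj in h. Qed.

Lemma rho_step (R : realType) (m : nat) (u : 'I_m -> nat) (e e' : 'I_m -> bool) j (y : 'rV[R]_m) :
  in_box u y -> e j = false -> e' j = true -> (forall l, l != j -> e' l = e l) ->
  kap j (rho u e' y) = kap j (rho u e y) /\
  (rho u e' y j : nat) = ((rho u e y j : nat) + (y 0%R j \isn't a Num.int))%N.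
Proof.
move=> hb ej e'j he; split.
  apply/ffunP => l; rewrite !ffunE; have [//|lj] := eqVneq l j.
  have h1 := rhoE e l hb; have h2 := rhoE e' l hb; rewrite /rho !ffunE in h1 h2 *.
  apply/eqP; rewrite -eqz_nat h1 h2 !rd_floor he //.
apply/eqP; rewrite -eqz_nat PoszD !rhoE // !rd_floor ej e'j /=.
by rewrite addr0.
Qed.

Lemma rho_inj (R : realType) (m : nat) (u : 'I_m -> nat) (C : {fset 'rV[R]_m}) e :
  is_code u C -> (forall x y, x \in C -> y \in C -> x != y -> 1 <= sup_dist x y) ->
  {in C &, injective (rho u e)}.
Proof.
move=> hc sep x y xC yC E; apply/eqP; apply: contraT => xy.
have := sep x y xC yC xy; rewrite leNgt sd_lt1 //.
exact: (rho_close (hc _ xC) (hc _ yC) E).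
Qed.

Lemma up_chain (R : realType) (m : nat) (u : 'I_m -> nat) (C : {fset 'rV[R]_m})
   (e e' : 'I_m -> bool) j (g : G u) x :
  is_code u C -> (forall x y, x \in C -> y \in C -> x != y -> 1 <= sup_dist x y) ->
  e j = false -> e' j = true -> (forall l, l != j -> e' l = e l) ->
  (forall z, z <> g -> exists2 y, y \in C & rho u e y = z) ->
  x \in C -> x 0 j \isn't a Num.int ->
  kap j g = kap j (rho u e x) /\ (rho u e x j < g j)%N.
Proof.
move=> hc sep ej e'j he sur xC xj.
have hinj : forall a b, a \in C -> b \in C -> rho u e' a = rho u e' b -> a = b.
  by move=> a b aC bC; apply: (rho_inj (e:=e') hc sep aC bC).
have hmv : forall y, y \in C -> rho u e' y = rho u e y \/
   (kap j (rho u e' y) = kap j (rho u e y) /\ (u j - rho u e' y j < u j - rho u e y j)%N).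
  move=> y yC; have [k1 k2] := rho_step (hc _ yC) ej e'j he.
  case: (boolP (y 0 j \is a Num.int)) => yi.
    by left; apply: kap_eq k1 _; rewrite k2 yi addn0.
  right; split => //; have := ltn_ord (rho u e' y j); rewrite k2 yi.
  lia.
have hx : rho u e' x <> rho u e x.
  move=> E; have [_ k2] := rho_step (hc _ xC) ej e'j he.
  by move: k2; rewrite E xj addn1 => /eqP; rewrite eqn_leq ltnn andbF.
have [k1 k2] := @chain _ _ _ (fun y => y \in C) (kap j) (fun z : G u => (u j - z j)%N)
  (rho u e) (rho u e') g hinj sur hmv x xC hx.
split => //; move: k2; have := ltn_ord (g j); have := ltn_ord (rho u e x j).
lia.
Qed.

Lemma down_chain (R : realType) (m : nat) (u : 'I_m -> nat) (C : {fset 'rV[R]_m})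
   (e e' : 'I_m -> bool) j (g : G u) x :
  is_code u C -> (forall x y, x \in C -> y \in C -> x != y -> 1 <= sup_dist x y) ->
  e j = false -> e' j = true -> (forall l, l != j -> e' l = e l) ->
  (forall z, z <> g -> exists2 y, y \in C & rho u e' y = z) ->
  x \in C -> x 0 j \isn't a Num.int ->
  kap j g = kap j (rho u e' x) /\ (g j < rho u e' x j)%N.
Proof.
move=> hc sep ej e'j he sur xC xj.
have hinj : forall a b, a \in C -> b \in C -> rho u e a = rho u e b -> a = b.
  by move=> a b aC bC; apply: (rho_inj (e:=e) hc sep aC bC).
have hmv : forall y, y \in C -> rho u e y = rho u e' y \/
   (kap j (rho u e y) = kap j (rho u e' y) /\ (rho u e y j < rho u e' y j)%N).
  move=> y yC; have [k1 k2] := rho_step (hc _ yC) ej e'j he.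
  case: (boolP (y 0 j \is a Num.int)) => yi.
    by left; symmetry; apply: kap_eq k1 _; rewrite k2 yi addn0.
  by right; split => //; rewrite k2 yi addn1.
have hx : rho u e x <> rho u e' x.
  move=> E; have [_ k2] := rho_step (hc _ xC) ej e'j he.
  by move: k2; rewrite E xj addn1 => /eqP; rewrite eqn_leq ltnn andbF.
have [k1 k2] := @chain _ _ _ (fun y => y \in C) (kap j) (fun z : G u => (z j : nat))
  (rho u e') (rho u e) g hinj sur hmv x xC hx.
by split.
Qed.

Lemma missing_rho (R : realType) (m : nat) (u : 'I_m -> nat) (C : {fset 'rV[R]_m}) e x0 :
  is_code u C -> (forall x y, x \in C -> y \in C -> x != y -> 1 <= sup_dist x y) ->
  #|` C| = (#|{: G u}| - 1)%N -> x0 \in C ->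
  exists g, (forall y, y \in C -> rho u e y <> g) /\
            (forall z, z <> g -> exists2 y, y \in C & rho u e y = z).
Proof.
move=> hc sep card x0C; apply: missing => //; first exact: rho_inj.
by apply/card_gt0P; exists (rho u e x0).
Qed.

Lemma eqxx_or (m : nat) (j k : 'I_m) : (j == j) || (j == k).
Proof. by rewrite eqxx. Qed.

Lemma orF_off (m : nat) (j k : 'I_m) :
  forall l, l != j -> (l == j) || (l == k) = (l == k).
Proof. by move=> l /negbTE ->. Qed.

Lemma one_dir (R : realType) (m : nat) (u : 'I_m -> nat) (C : {fset 'rV[R]_m}) x y j k :
  is_code u C -> (forall x y, x \in C -> y \in C -> x != y -> 1 <= sup_dist x y) ->
  #|` C| = (#|{: G u}| - 1)%N ->
  x \in C -> y \in C -> x 0 j \isn't a Num.int -> y 0 k \isn't a Num.int -> j = k.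
Proof.
move=> hc sep card xC yC xj yk; apply/eqP; apply: contraT => jk.
pose e0 := fun l : 'I_m => false.
pose e1 := fun l : 'I_m => l == k.
have [g0 [_ sur0]] := missing_rho e0 hc sep card xC.
have [g1 [_ sur1]] := missing_rho e1 hc sep card xC.
have kj : k != j by rewrite eq_sym.
have [a1 _] := @up_chain _ _ _ C e0 (fun l => l == j) j g0 x hc sep erefl (eqxx j)
   (fun l lj => negbTE lj) sur0 xC xj.
have [a2 _] := @up_chain _ _ _ C e1 (fun l => (l == j) || (l == k)) j g1 x hc sep
   (negbTE jk) (@eqxx_or _ j k) (@orF_off _ j k) sur1 xC xj.
have [_ a3] := @down_chain _ _ _ C e0 e1 k g1 y hc sep erefl (eqxx k)
   (fun l lk => negbTE lk) sur1 yC yk.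
have [_ a4] := @up_chain _ _ _ C e0 e1 k g0 y hc sep erefl (eqxx k)
   (fun l lk => negbTE lk) sur0 yC yk.
have b1 := kap_coord a1 kj.
have b2 := kap_coord a2 kj.
have [_ sx] := @rho_step _ _ u e0 e1 k x (hc _ xC) erefl (eqxx k) (fun l lk => negbTE lk).
have [_ sy] := @rho_step _ _ u e0 e1 k y (hc _ yC) erefl (eqxx k) (fun l lk => negbTE lk).
move: a3 a4 b1 b2 sx sy; rewrite yk; lia.
Qed.
Lemma rho_int (R : realType) (m : nat) (u : 'I_m -> nat) e (x : 'rV[R]_m) l :
  in_box u x -> x 0 l \is a Num.int -> x 0 l = ((rho u e x l : nat)%:R).
Proof.
move=> hb hi; have := rhoE e l hb; rewrite rd_floor hi andbF addr0 => h.
by rewrite -[LHS](floorK hi) -h.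
Qed.

Lemma two_elems (K : choiceType) (A : {fset K}) :
  (1 < #|` A|)%N -> exists x y, [/\ x \in A, y \in A & x != y].
Proof.
move=> h.
have /fset0Pn [x xA] : A != fset0 by apply/eqP => E; rewrite E cardfs0 in h.
have h2 : (0 < #|` A `\ x|)%N by move: h; rewrite (cardfsD1 x A) xA; lia.
have /fset0Pn [y] : A `\ x != fset0 by apply/eqP => E; rewrite E cardfs0 in h2.
rewrite in_fsetD1 => /andP [yx yA]; exists y, x; split => //.
Qed.

Lemma dist_nat (R : realType) (p q : nat) : p != q -> 1 <= `|p%:R - q%:R : R|.
Proof.
rewrite ler_normr; case: (ltngtP p q) => // h _.
  have : (p + 1)%:R <= q%:R :> R by rewrite ler_nat addn1.
  by rewrite natrD => h'; apply/orP; right; lra.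
have : (q + 1)%:R <= p%:R :> R by rewrite ler_nat addn1.
by rewrite natrD => h'; apply/orP; left; lra.
Qed.

Lemma prod_ge4 (m : nat) (u : 'I_m -> nat) j k :
  j != k -> (0 < u j)%N -> (0 < u k)%N -> (1 < (\prod_(i < m) (u i).+1) - 1)%N.
Proof.
move=> jk uj uk; rewrite (bigD1 j) //= (bigD1 k) /=; last by rewrite eq_sym.
have : (0 < \prod_(i < m | (i != j) && (i != k)) (u i).+1)%N by rewrite prodn_gt0.
move: (\prod_(i < m | _) _)%N => P hP.
have h1 : (2 <= (u j).+1)%N by [].
have h2 : (2 <= (u k).+1)%N by [].
have := leq_mul h1 (leq_mul h2 hP); lia.
Qed.

Definition emb (R : realType) (m : nat) (u : 'I_m -> nat) (z : G u) : 'rV[R]_m :=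
  \row_l ((z l : nat)%:R).

Lemma emb_inj (R : realType) (m : nat) (u : 'I_m -> nat) : injective (@emb R m u).
Proof.
move=> a b /rowP E; apply/ffunP => l; apply: val_inj; have := E l; rewrite !mxE.
by move/eqP; rewrite eqr_nat => /eqP.
Qed.

Lemma sep_of_opt (R : realType) (m : nat) (u : 'I_m -> nat) (C : {fset 'rV[R]_m}) j k :
  j != k -> (0 < u j)%N -> (0 < u k)%N ->
  optimal_code u ((\prod_(i < m) (u i).+1) - 1)%N C ->
  forall x y, x \in C -> y \in C -> x != y -> 1 <= sup_dist x y.
Proof.
move=> jk uj uk [hc hcard hopt] x y xC yC xy.
pose z0 : G u := [ffun l => ord0].
pose C' := (@emb R m u) @` [fset z in predC1 z0].
have hC'c : is_code u C'.
  move=> w /imfsetP [z _ ->] l; rewrite mxE ler0n /= ler_nat.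
  by rewrite -ltnS ltn_ord.
have hC'card : #|` C'| = ((\prod_(i < m) (u i).+1) - 1)%N.
  have /eqP -> : #|` C'| == #|` [fset z in predC1 z0]|.
    by apply/card_in_imfsetP => a b _ _; apply: emb_inj.
  by rewrite card_imfset //= -cardE cardC1 cardG subn1.
have hd := hopt C' hC'c hC'card.
apply: le_trans (delta_le xC yC xy); apply: le_trans hd.
have [a [b [aC bC ab]]] := two_elems (leq_trans (prod_ge4 jk uj uk) (eq_leq (esym hC'card))).
apply: (delta_ge aC bC ab) => p q /imfsetP [zp _ ->] /imfsetP [zq _ ->] pq.
have /existsP [l hl] : [exists l, zp l != zq l].
  apply: contraR pq => /existsPn h; apply/eqP; congr emb; apply/ffunP => l.
  by have := h l; rewrite negbK => /eqP.
apply: le_trans (sd_ge _ _ l); rewrite !mxE; apply: dist_nat.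
by apply: contra hl => /eqP h; apply/eqP/val_inj.
Qed.
Lemma trivial_case (R : realType) (m : nat) (u : 'I_m -> nat)
  (C : {fset 'rV[R]_m}) (i : 'I_m) :
  (forall l, l != i -> u l = 0%N) ->
  optimal_code u ((\prod_(i < m) (u i).+1) - 1)%N C ->
  exists (A B : {fset 'rV[R]_m}) (i : 'I_m),
    [/\ C = A `|` B /\ A `&` B = fset0,
        #|` A| = ((\prod_(s < m) (u s).+1) - (u i).+1)%N,
        #|` B| = u i,
        (forall a, a \in A -> in_box u a /\ int_point a) &
        (exists x : 'rV[R]_m, int_point x /\
          forall b, b \in B -> exists t : R, b = (x + t *: delta_mx 0 i)%R)].
Proof.
move=> hu [hc hcard _].
have hN : (\prod_(l < m) (u l).+1 = (u i).+1)%N.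
  by rewrite (bigD1 i) //= big1 ?muln1 // => l /hu ->.
exists fset0, C, i; split.
- by rewrite fset0U fset0I.
- by rewrite cardfs0 hN subnn.
- by rewrite hcard hN subn1.
- by move=> a; rewrite in_fset0.
exists 0; split; first by exists (fun _ => 0) => l; rewrite mxE.
move=> b bC; exists (b 0 i); apply/rowP => l; rewrite !mxE eqxx /=.
have [->|li] := eqVneq l i; first by rewrite mulr1 add0r.
rewrite mulr0 addr0; have /andP [h1 h2] := hc b bC l.
by move: h1 h2; rewrite hu // => h1 h2; apply/eqP; rewrite eq_le h1 h2.
Qed.
Lemma grid_eq (m : nat) (u : 'I_m -> nat) (a b : G u) :
  (forall l, (a l : nat) = b l) -> a = b.
Proof. by move=> h; apply/ffunP => l; apply: val_inj; apply: h. Qed.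

Lemma main_case (R : realType) (m : nat) (u : 'I_m -> nat)
  (C : {fset 'rV[R]_m}) (i : 'I_m) x0 :
  is_code u C -> (forall x y, x \in C -> y \in C -> x != y -> 1 <= sup_dist x y) ->
  #|` C| = ((\prod_(i < m) (u i).+1) - 1)%N -> x0 \in C ->
  (forall l x, l != i -> x \in C -> x 0 l \is a Num.int) ->
  exists (A B : {fset 'rV[R]_m}) (i : 'I_m),
    [/\ C = A `|` B /\ A `&` B = fset0,
        #|` A| = ((\prod_(s < m) (u s).+1) - (u i).+1)%N,
        #|` B| = u i,
        (forall a, a \in A -> in_box u a /\ int_point a) &
        (exists x : 'rV[R]_m, int_point x /\
          forall b, b \in B -> exists t : R, b = (x + t *: delta_mx 0 i)%R)].
Proof.
move=> hc sep hcard x0C hi.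
have card' : #|` C| = (#|{: G u}| - 1)%N by rewrite cardG.
pose e0 := fun _ : 'I_m => false.
have [g [nhit sur]] := missing_rho e0 hc sep card' x0C.
pose inL := fun x : 'rV[R]_m => [forall l, (l != i) ==> (x 0 l == ((g l : nat)%:R))].
have PiL : forall x, x \in C -> x 0 i \isn't a Num.int -> inL x.
  move=> x xC xi.
  have [k1 _] := @up_chain _ _ _ C e0 (fun l => l == i) i g x hc sep erefl (eqxx i)
     (fun l li => negbTE li) sur xC xi.
  apply/forallP => l; apply/implyP => li.
  by rewrite (rho_int e0 (hc _ xC) (hi l x li xC)) (kap_coord k1 li).
have inLint : forall x, x \in C -> inL x -> forall l, l != i -> (rho u e0 x l : nat) = g l.
  move=> x xC /forallP hx l li; have := implyP (hx l) li.
  by rewrite (rho_int e0 (hc _ xC) (hi l x li xC)) eqr_nat => /eqP.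
pose A := [fset x in C | ~~ inL x]; pose B := [fset x in C | inL x].
have AUB : C = A `|` B.
  apply/fsetP => x; rewrite in_fsetU !inE.
  by case: (x \in C); case: (inL x).
have AIB : A `&` B = fset0.
  apply/fsetP => x; rewrite in_fsetI !inE.
  by case: (x \in C); case: (inL x).
pose f := fun b : 'rV[R]_m => rho u e0 b i.
have finj : {in B &, injective f}.
  move=> a b; rewrite !inE => /andP [aC aL] /andP [bC bL] E.
  apply: (rho_inj (e:=e0) hc sep aC bC); apply: grid_eq => l.
  have [->|li] := eqVneq l i; first by rewrite /f in E; rewrite E.
  by rewrite (inLint a aC aL l li) (inLint b bC bL l li).
have fimg : f @` B = [fset t in predC1 (g i)].
  apply/fsetP => t; rewrite [in RHS]inE /=; apply/idP/idP.
    case/imfsetP => b; rewrite inE => /andP [bC bL] ->.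
    apply/negP => /eqP E; apply: (nhit b bC); apply: grid_eq => l.
    have [->|li] := eqVneq l i; first by rewrite /f in E; rewrite E.
    by rewrite (inLint b bC bL l li).
  move=> tg.
  pose z := (finfun (fun l => if l == i then inord (t : nat) else g l) : G u).
  have zi : (z i : nat) = t by rewrite ffunE eqxx inordK.
  have zl : forall l, l != i -> z l = g l by move=> l li; rewrite ffunE (negbTE li).
  have zg : z <> g by move=> E; move: tg; rewrite -E; apply/negP; rewrite negbK; apply/eqP/val_inj.
  have [c cC rc] := sur z zg.
  apply/imfsetP; exists c; last by apply: ord_inj; rewrite /f rc zi.
  change (c \in B); rewrite !inE cC /=; apply/forallP => l; apply/implyP => li.
  by rewrite (rho_int e0 (hc _ cC) (hi l c li cC)) rc zl.
have hB : #|` B| = u i.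
  have /eqP <- := introT (card_in_imfsetP f B) finj.
  by rewrite fimg card_imfset //= -cardE cardC1 card_ord.
exists A, B, i; split => //.
- have := cardfsUI A B; rewrite -AUB AIB cardfs0 addn0 hcard hB; lia.
- move=> a; rewrite inE => /andP [aC aL]; split; first exact: hc.
  exists (fun l => Num.floor (a 0 l)) => l; rewrite floorK //.
  have [->|li] := eqVneq l i; last exact: hi.
  by apply: contraT => ai; move: aL; rewrite PiL.
exists (\row_l (if l == i then 0 else (g l : nat)%:R)); split.
  exists (fun l => if l == i then 0 else (g l : nat)%:Z) => l; rewrite mxE.
  by case: (l == i).
move=> b; rewrite inE => /andP [bC /forallP bL]; exists (b 0 i).
apply/rowP => l; rewrite !mxE eqxx /=.
have [->|li] := eqVneq l i; first by rewrite mulr1 add0r.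
by rewrite mulr0 addr0; apply/eqP; have := implyP (bL l) li.
Qed.

Unset Implicit Arguments.

Theorem theorem4p5 (R : realType) (m : nat) (hm : (0 < m)%N) (u : 'I_m -> nat)
  (C : {fset 'rV[R]_m}) :
  optimal_code u ((\prod_(i < m) (u i).+1) - 1)%N C ->
  exists (A B : {fset 'rV[R]_m}) (i : 'I_m),
    [/\ C = A `|` B /\ A `&` B = fset0,
        #|` A| = ((\prod_(s < m) (u s).+1) - (u i).+1)%N,
        #|` B| = u i,
        (forall a, a \in A -> in_box u a /\ int_point a) &
        (exists x : 'rV[R]_m, int_point x /\
          forall b, b \in B -> exists t : R, b = (x + t *: delta_mx 0 i)%R)].
Proof.
move=> hopt; have [hc hcard _] := hopt.
case: (boolP [exists j, [exists k, (j != k) && (0 < u j)%N && (0 < u k)%N]]).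
  move=> /existsP [j /existsP [k /andP [/andP [jk uj] uk]]].
  have sep := sep_of_opt jk uj uk hopt.
  have [x0 [y0 [x0C _ _]]] := two_elems (leq_trans (prod_ge4 jk uj uk) (eq_leq (esym hcard))).
  have card' : #|` C| = (#|{: G u}| - 1)%N by rewrite cardG.
  case: (classic (exists j0 x, x \in C /\ x 0 j0 \isn't a Num.int)).
    move=> [j0 [x [xC xj]]]; apply: (main_case (i := j0) hc sep hcard x0C).
    move=> l y lj yC; apply: contraT => yl.
    by have := one_dir hc sep card' xC yC xj yl => E; rewrite E eqxx in lj.
  move=> none; apply: (main_case (i := Ordinal hm) hc sep hcard x0C).
  move=> l y _ yC; apply: contraT => yl; exfalso; apply: none; by exists l, y.
move=> /existsPn h.
case: (boolP [exists j, (0 < u j)%N]).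
  move=> /existsP [j uj]; apply: (trivial_case (i := j)) => // l lj.
  have /existsPn := h j => /(_ l); rewrite eq_sym lj uj /= lt0n negbK => /eqP.
  done.
move=> /existsPn h2; apply: (trivial_case (i := Ordinal hm)) => // l _.
by have := h2 l; rewrite lt0n negbK => /eqP.
Qed.
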